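(* For $\lambda\in\mathbb R$ let $q_\lambda(x,y)=6x^5y+20\lambda x^3y^3+6xy^5$. Then: (1) if $\lambda=1$, $\mathcal S(q_\lambda)=\{(1,1)\}$; (2) if $\lambda>0$ and $\lambda\ne1$, $\mathcal S(q_\lambda)=\{(2,2)\}$; (3) if $-\tfrac35<\lambda\le0$, $\mathcal S(q_\lambda)=\{(2,3),(3,2)\}$; (4) if $\lambda\le-\tfrac35$, $\mathcal S(q_\lambda)=\{(3,3)\}$.
   Context: A representation of a real binary sextic $p$ is an expression $p=\sum_{j=1}^r\lambda_j(\alpha_jx+\beta_jy)^{6}$ with $r\ge0$, $\alpha_j,\beta_j\in\mathbb R$, $0\ne\lambda_j\in\mathbb R$; it is honest if the linear forms $\alpha_jx+\beta_jy$ are pairwise non-proportional. Its badge is $(a,b)$ where $a=\#\{j:\lambda_j>0\}$, $b=\#\{j:\lambda_j<0\}$; $\mathcal B(p)$ is the set of badges of honest representations. With $(a,b)\preceq(c,d)$ iff $a\le c,b\le d$, a signature is a minimal element of $\mathcal B(p)$, and $\mathcal S(p)$ is the set of signatures. *)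

(* Defs.v *)
From Stdlib Require Import Reals Lra Lia List.
Import ListNotations.
Open Scope R_scope.

(* A term lambda * (alpha x + beta y)^6 is encoded as the triple (lambda, alpha, beta). *)
Definition term : Type := (R * R * R)%type.
Definition tlam (t : term) : R := fst (fst t).
Definition talpha (t : term) : R := snd (fst t).
Definition tbeta (t : term) : R := snd t.

(* A real binary form of degree 6, seen as its polynomial function R^2 -> R. *)
Definition binform : Type := R -> R -> R.

Definition rep_eval (l : list term) (x y : R) : R :=
  fold_right (fun t acc => tlam t * (talpha t * x + tbeta t * y) ^ 6 + acc) 0 l.

Definition is_representation (p : binform) (l : list term) : Prop :=
  Forall (fun t => tlam t <> 0) l /\ forall x y : R, p x y = rep_eval l x y.

Definition nonproportional (s t : term) : Prop :=
  talpha s * tbeta t - talpha t * tbeta s <> 0.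

Definition honest (l : list term) : Prop := ForallOrdPairs nonproportional l.

Definition badge (l : list term) : nat * nat :=
  (length (filter (fun t => if Rlt_dec 0 (tlam t) then true else false) l),
   length (filter (fun t => if Rlt_dec (tlam t) 0 then true else false) l)).

Definition in_badges (p : binform) (ab : nat * nat) : Prop :=
  exists l : list term, is_representation p l /\ honest l /\ badge l = ab.

Definition badge_le (ab cd : nat * nat) : Prop :=
  (fst ab <= fst cd)%nat /\ (snd ab <= snd cd)%nat.

Definition is_signature (p : binform) (ab : nat * nat) : Prop :=
  in_badges p ab /\ forall cd, in_badges p cd -> badge_le cd ab -> cd = ab.

Definition q (lam : R) : binform :=
  fun x y => 6 * x ^ 5 * y + 20 * lam * x ^ 3 * y ^ 3 + 6 * x * y ^ 5.

(* Main.v *)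
Require Import Defs.
From Stdlib Require Import Reals Lra Lia List Psatz.
Import ListNotations.
Open Scope R_scope.
Definition lsum (f : term -> R) (l : list term) : R :=
  fold_right (fun t acc => f t + acc) 0 l.

Lemma lsum_ext f g l : (forall t, In t l -> f t = g t) -> lsum f l = lsum g l.
Proof.
  induction l as [|a l IH]; intros H; simpl; auto.
  rewrite H by (left; auto). rewrite IH; auto. intros t Ht; apply H; right; auto.
Qed.

Lemma lsum_cons f t l : lsum f (t :: l) = f t + lsum f l.
Proof. reflexivity. Qed.

Definition Ev (f : binform) (w0 w1 w2 w3 w4 w5 w6 : R) : R :=
  w0 * f 1 (-3) + w1 * f 1 (-2) + w2 * f 1 (-1) + w3 * f 1 0 + w4 * f 1 1
  + w5 * f 1 2 + w6 * f 1 3.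

Lemma rep_eval_cons t l x y :
  rep_eval (t :: l) x y = tlam t * (talpha t * x + tbeta t * y) ^ 6 + rep_eval l x y.
Proof. reflexivity. Qed.

Lemma Ev_rep l w0 w1 w2 w3 w4 w5 w6 :
  Ev (rep_eval l) w0 w1 w2 w3 w4 w5 w6 =
  lsum (fun t => tlam t * Ev (fun x y => (talpha t * x + tbeta t * y) ^ 6) w0 w1 w2 w3 w4 w5 w6) l.
Proof.
  induction l as [|a l IH].
  - unfold Ev; simpl; ring.
  - rewrite lsum_cons, <- IH. unfold Ev. rewrite !rep_eval_cons. ring.
Qed.

Definition sext (c0 c1 c2 c3 c4 c5 c6 a b : R) : R :=
  c0*a^6 + c1*a^5*b + c2*a^4*b^2 + c3*a^3*b^3 + c4*a^2*b^4 + c5*a*b^5 + c6*b^6.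
Definition V0 (c0 c1 c2 c3 c4 c5 c6 : R) : R := (-1/360)*c1 + (1/2700)*c2 + (1/960)*c3 + (-1/2160)*c4 + (-1/1440)*c5 + (1/720)*c6.
Definition V1 (c0 c1 c2 c3 c4 c5 c6 : R) : R := (1/40)*c1 + (-1/200)*c2 + (-1/120)*c3 + (1/180)*c4 + (1/360)*c5 + (-1/120)*c6.
Definition V2 (c0 c1 c2 c3 c4 c5 c6 : R) : R := (-1/8)*c1 + (1/20)*c2 + (13/960)*c3 + (-13/720)*c4 + (-1/288)*c5 + (1/48)*c6.
Definition V3 (c0 c1 c2 c3 c4 c5 c6 : R) : R := (1/1)*c0 + (-49/540)*c2 + (7/270)*c4 + (-1/36)*c6.
Definition V4 (c0 c1 c2 c3 c4 c5 c6 : R) : R := (1/8)*c1 + (1/20)*c2 + (-13/960)*c3 + (-13/720)*c4 + (1/288)*c5 + (1/48)*c6.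
Definition V5 (c0 c1 c2 c3 c4 c5 c6 : R) : R := (-1/40)*c1 + (-1/200)*c2 + (1/120)*c3 + (1/180)*c4 + (-1/360)*c5 + (-1/120)*c6.
Definition V6 (c0 c1 c2 c3 c4 c5 c6 : R) : R := (1/360)*c1 + (1/2700)*c2 + (-1/960)*c3 + (-1/2160)*c4 + (1/1440)*c5 + (1/720)*c6.

Lemma Ev_pow6 a b c0 c1 c2 c3 c4 c5 c6 :
  Ev (fun x y => (a * x + b * y) ^ 6)
     (V0 c0 c1 c2 c3 c4 c5 c6) (V1 c0 c1 c2 c3 c4 c5 c6) (V2 c0 c1 c2 c3 c4 c5 c6)
     (V3 c0 c1 c2 c3 c4 c5 c6) (V4 c0 c1 c2 c3 c4 c5 c6) (V5 c0 c1 c2 c3 c4 c5 c6)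
     (V6 c0 c1 c2 c3 c4 c5 c6)
  = sext c0 c1 c2 c3 c4 c5 c6 a b.
Proof.
  unfold Ev, V0, V1, V2, V3, V4, V5, V6, sext. field.
Qed.

Lemma Ev_q lam c0 c1 c2 c3 c4 c5 c6 :
  Ev (q lam)
     (V0 c0 c1 c2 c3 c4 c5 c6) (V1 c0 c1 c2 c3 c4 c5 c6) (V2 c0 c1 c2 c3 c4 c5 c6)
     (V3 c0 c1 c2 c3 c4 c5 c6) (V4 c0 c1 c2 c3 c4 c5 c6) (V5 c0 c1 c2 c3 c4 c5 c6)
     (V6 c0 c1 c2 c3 c4 c5 c6)
  = c1 + lam * c3 + c5.
Proof.
  unfold Ev, V0, V1, V2, V3, V4, V5, V6, q. field.
Qed.

Lemma Ev_ext f g w0 w1 w2 w3 w4 w5 w6 : (forall x y, f x y = g x y) ->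
  Ev f w0 w1 w2 w3 w4 w5 w6 = Ev g w0 w1 w2 w3 w4 w5 w6.
Proof. intros H; unfold Ev; rewrite !H; reflexivity. Qed.

Lemma mom lam l c0 c1 c2 c3 c4 c5 c6 :
  is_representation (q lam) l ->
  lsum (fun t => tlam t * sext c0 c1 c2 c3 c4 c5 c6 (talpha t) (tbeta t)) l
  = c1 + lam * c3 + c5.
Proof.
  intros [_ Hrep].
  rewrite <- (Ev_q lam c0 c1 c2 c3 c4 c5 c6).
  rewrite (Ev_ext _ _ _ _ _ _ _ _ _ Hrep), Ev_rep.
  apply lsum_ext. intros t _. rewrite Ev_pow6. reflexivity.
Qed.
Lemma core s p B mu : 3/5 <= mu -> B > 4*p -> 0 <= B -> s >= 2*p -> s >= -2*p ->
  (s - 2*mu*p + mu*B)^2 > 4*B*p*(1-mu*mu).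
Proof.
  intros Hm Hd HB H1 H2.
  destruct (Rle_dec mu 1) as [Hle|Hgt].
  - destruct (Rle_dec p 0) as [Hp|Hp].
    + assert (HX : s - 2*mu*p + mu*B > 0).
      { destruct (Req_dec p 0) as [E|E].
        - subst p. assert (B > 0) by lra. nra.
        - assert (p < 0) by lra. nra. }
      assert (HR : B*p*(1-mu*mu) <= 0).
      { assert (0 <= 1 - mu*mu) by nra.
        assert (B*p <= 0) by nra. nra. }
      nra.
    + assert (Hp' : p > 0) by lra.
      set (u := 1 - mu).
      assert (Hu0 : 0 <= u) by (unfold u; lra).
      assert (Hu1 : u <= 2/5) by (unfold u; lra).
      assert (HY : s - 2*mu*p + mu*B >= 2*p*u + (1-u)*B) by (unfold u; nra).
      assert (HY0 : 2*p*u + (1-u)*B > 0) by nra.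
      assert (Hsq : (s - 2*mu*p + mu*B)^2 >= (2*p*u + (1-u)*B)^2) by nra.
      assert (E : 4*B*p*(1-mu*mu) = 4*B*p*(u*(2-u))) by (unfold u; ring).
      rewrite E.
      assert (Eg : (2*p*u + (1-u)*B)^2 - 4*B*p*(u*(2-u)) = (B - 2*p*u)^2 - B*B*(u*(2-u))) by ring.
      destruct (Req_dec u 0) as [Eu|Eu].
      * rewrite Eu in *. nra.
      * assert (Hu : u > 0) by lra.
        assert (Hb1 : B - 2*p*u > B*(1-u/2)) by nra.
        assert (Hb2 : B*(1-u/2) >= 0) by nra.
        assert (Hb3 : (B - 2*p*u)^2 > (B*(1-u/2))^2) by nra.
        assert (Hb4 : (1-u/2)^2 - u*(2-u) >= 0).
        { assert (E2 : (1-u/2)^2 - u*(2-u) = 5/4*((2/5-u)*(2-u))) by field. rewrite E2.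
          assert (0 <= (2/5-u)*(2-u)) by nra. lra. }
        assert (Hb5 : (B*(1-u/2))^2 >= B*B*(u*(2-u))) by nra.
        nra.
  - destruct (Rle_dec 0 p) as [Hp|Hp].
    + assert (HX : s - 2*mu*p + mu*B > 0) by nra.
      assert (HR : B*p*(1-mu*mu) <= 0).
      { assert (1 - mu*mu < 0) by nra. assert (0 <= B*p) by nra. nra. }
      nra.
    + set (w := -p).
      assert (Hw : w > 0) by (unfold w; lra).
      assert (HY : s - 2*mu*p + mu*B >= 2*w*(1+mu) + mu*B) by (unfold w; nra).
      assert (HY0 : 2*w*(1+mu) + mu*B > 0) by nra.
      assert (Hsq : (s - 2*mu*p + mu*B)^2 >= (2*w*(1+mu) + mu*B)^2) by nra.
      assert (E : 4*B*p*(1-mu*mu) = 4*B*w*(mu*mu-1)) by (unfold w; ring).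
      rewrite E.
      assert (Eg : (2*w*(1+mu) + mu*B)^2 - 4*B*w*(mu*mu-1)
                   = 4*w*w*(1+mu)^2 + 4*w*B*(1+mu) + mu*mu*B*B) by ring.
      assert (0 < 4*w*w*(1+mu)^2) by (apply Rmult_lt_0_compat; [nra| apply pow_lt; lra]).
      assert (0 <= 4*w*B*(1+mu)) by (apply Rmult_le_pos; [nra|lra]).
      assert (0 <= mu*mu*B*B) by nra.
      nra.
Qed.
Definition cub (e0 e1 e2 e3 a b : R) : R := e0*a^3 + e1*a^2*b + e2*a*b^2 + e3*b^3.
Definition Qf (lam e0 e1 e2 e3 : R) : R := 2*(e0*e1 + e2*e3 + lam*(e0*e3 + e1*e2)).

Lemma mom_cub lam l e0 e1 e2 e3 :
  is_representation (q lam) l ->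
  lsum (fun t => tlam t * (cub e0 e1 e2 e3 (talpha t) (tbeta t))^2) l = Qf lam e0 e1 e2 e3.
Proof.
  intros H.
  rewrite (lsum_ext _ (fun t => tlam t * sext (e0*e0) (2*e0*e1) (e1*e1+2*e0*e2)
      (2*e0*e3+2*e1*e2) (e2*e2+2*e1*e3) (2*e2*e3) (e3*e3) (talpha t) (tbeta t))).
  - rewrite (mom lam l _ _ _ _ _ _ _ H). unfold Qf. ring.
  - intros t _. unfold cub, sext. ring.
Qed.

Definition posb (t : term) : bool := if Rlt_dec 0 (tlam t) then true else false.
Definition negb' (t : term) : bool := if Rlt_dec (tlam t) 0 then true else false.

Lemma badge_eq l : badge l = (length (filter posb l), length (filter negb' l)).
Proof. reflexivity. Qed.

Lemma lsum_nonpos l (H : term -> R) :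
  (forall t, In t (filter posb l) -> H t = 0) ->
  lsum (fun t => tlam t * (H t)^2) l <= 0.
Proof.
  induction l as [|a l IH]; intros Hz; [simpl; lra|].
  rewrite lsum_cons.
  assert (Hrest : lsum (fun t => tlam t * (H t)^2) l <= 0).
  { apply IH. intros t Ht. apply Hz. simpl. destruct (posb a); [right|]; auto. }
  destruct (Rlt_dec 0 (tlam a)) as [Hp|Hp].
  - rewrite (Hz a). 2:{ simpl. unfold posb at 1. destruct (Rlt_dec 0 (tlam a)); [left; auto| contradiction]. }
    replace (tlam a * 0^2) with 0 by ring. lra.
  - assert (0 <= (H a)^2) by (apply pow2_ge_0). nra.
Qed.

Lemma key lam l e0 e1 e2 e3 :
  is_representation (q lam) l -> Qf lam e0 e1 e2 e3 > 0 ->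
  (forall t, In t (filter posb l) -> cub e0 e1 e2 e3 (talpha t) (tbeta t) = 0) -> False.
Proof.
  intros Hr HQ Hz.
  pose proof (mom_cub lam l e0 e1 e2 e3 Hr) as E.
  pose proof (lsum_nonpos l (fun t => cub e0 e1 e2 e3 (talpha t) (tbeta t)) Hz).
  lra.
Qed.

Lemma point1 lam a b : (-1 < lam < 1 \/ 1 < lam) ->
  exists e0 e1 e2 e3, cub e0 e1 e2 e3 a b = 0 /\ Qf lam e0 e1 e2 e3 > 0.
Proof.
  intros [Hl|Hl].
  - set (c1 := cub 1 1 0 0 a b). set (c2 := cub 0 0 1 1 a b).
    destruct (Req_dec c1 0) as [E1|E1]; [destruct (Req_dec c2 0) as [E2|E2]|].
    + exists 1, 1, 0, 0. split; [exact E1|]. unfold Qf; lra.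
    + exists c2, c2, (-c1), (-c1). split.
      * unfold c1, c2, cub; ring.
      * unfold Qf. rewrite E1. pose proof (Rsqr_pos_lt c2 E2) as Hc; unfold Rsqr in Hc. nra.
    + exists c2, c2, (-c1), (-c1). split.
      * unfold c1, c2, cub; ring.
      * unfold Qf. pose proof (Rsqr_pos_lt c1 E1) as Hc; unfold Rsqr in Hc.
        replace (2 * (c2 * c2 + - c1 * - c1 + lam * (c2 * - c1 + c2 * - c1)))
          with ((1+lam)*(c2-c1)^2 + (1-lam)*(c2+c1)^2) by ring.
        assert (0 <= (c2 - c1)^2) by apply pow2_ge_0.
        assert (0 <= (c2 + c1)^2) by apply pow2_ge_0.
        assert (0 < (c2-c1)^2 + (c2+c1)^2) by nra.
        destruct (Rlt_dec 0 ((c2-c1)^2)).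
        { assert (0 < (1+lam)*(c2-c1)^2) by (apply Rmult_lt_0_compat; lra).
          assert (0 <= (1-lam)*(c2+c1)^2) by (apply Rmult_le_pos; lra). lra. }
        { assert (0 < (1-lam)*(c2+c1)^2) by (apply Rmult_lt_0_compat; lra).
          assert (0 <= (1+lam)*(c2-c1)^2) by (apply Rmult_le_pos; lra). lra. }
  - set (c1 := cub 1 0 0 1 a b). set (c2 := cub 0 1 1 0 a b).
    destruct (Req_dec c1 0) as [E1|E1]; [destruct (Req_dec c2 0) as [E2|E2]|].
    + exists 1, 0, 0, 1. split; [exact E1|]. unfold Qf; lra.
    + exists c2, (-c1), (-c1), c2. split.
      * unfold c1, c2, cub; ring.
      * unfold Qf. rewrite E1. pose proof (Rsqr_pos_lt c2 E2) as Hc; unfold Rsqr in Hc. nra.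
    + exists c2, (-c1), (-c1), c2. split.
      * unfold c1, c2, cub; ring.
      * unfold Qf. pose proof (Rsqr_pos_lt c1 E1) as Hc; unfold Rsqr in Hc.
        replace (2 * (c2 * - c1 + - c1 * c2 + lam * (c2 * c2 + - c1 * - c1)))
          with ((lam+1)*(c2-c1)^2 + (lam-1)*(c2+c1)^2) by ring.
        assert (0 <= (c2 - c1)^2) by apply pow2_ge_0.
        assert (0 <= (c2 + c1)^2) by apply pow2_ge_0.
        assert (0 < (c2-c1)^2 + (c2+c1)^2) by nra.
        destruct (Rlt_dec 0 ((c2-c1)^2)).
        { assert (0 < (lam+1)*(c2-c1)^2) by (apply Rmult_lt_0_compat; lra).
          assert (0 <= (lam-1)*(c2+c1)^2) by (apply Rmult_le_pos; lra). lra. }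
        { assert (0 < (lam-1)*(c2+c1)^2) by (apply Rmult_lt_0_compat; lra).
          assert (0 <= (lam+1)*(c2-c1)^2) by (apply Rmult_le_pos; lra). lra. }
Qed.
Lemma indef M11 M12 M22 : M11*M22 - M12^2 < 0 ->
  exists u v, u*u*M11 + 2*u*v*M12 + v*v*M22 > 0.
Proof.
  intros Hd.
  destruct (Rlt_dec 0 M11) as [H1|H1].
  { exists 1, 0. lra. }
  destruct (Rlt_dec 0 M22) as [H2|H2].
  { exists 0, 1. lra. }
  destruct (Req_dec M11 0) as [E|E].
  - exists (1 - M22), (2*M12). rewrite E in *.
    assert (0 < M12^2) by lra. nra.
  - exists (-M12), M11.
    replace (- M12 * - M12 * M11 + 2 * - M12 * M11 * M12 + M11 * M11 * M22)
      with (M11 * (M11*M22 - M12^2)) by ring.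
    assert (M11 < 0) by lra. nra.
Qed.

Lemma point2 lam a1 b1 a2 b2 : lam <= -(3/5) -> a1*b2 - a2*b1 <> 0 ->
  exists e0 e1 e2 e3, cub e0 e1 e2 e3 a1 b1 = 0 /\ cub e0 e1 e2 e3 a2 b2 = 0 /\
     Qf lam e0 e1 e2 e3 > 0.
Proof.
  intros Hl Hnp.
  set (A := b1*b2). set (Bc := -(b1*a2 + a1*b2)). set (C := a1*a2).
  set (M11 := 2*Bc*(A + lam*C)).
  set (M12 := A*A + C*C + lam*(Bc*Bc + 2*A*C)).
  set (M22 := 2*Bc*(lam*A + C)).
  assert (Hdet : M11*M22 - M12^2 < 0).
  { assert (E : M11*M22 - M12^2 =
      4*(Bc*Bc)*(A*C)*(1-(-lam)*(-lam)) - ((A*A+C*C) - 2*(-lam)*(A*C) + (-lam)*(Bc*Bc))^2)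
      by (unfold M11, M12, M22; ring).
    rewrite E.
    assert (HB : Bc*Bc > 4*(A*C)).
    { assert (E2 : Bc*Bc - 4*(A*C) = (a1*b2 - a2*b1)*(a1*b2 - a2*b1)) by (unfold A, Bc, C; ring).
      pose proof (Rsqr_pos_lt _ Hnp) as Hs. unfold Rsqr in Hs. lra. }
    pose proof (core (A*A+C*C) (A*C) (Bc*Bc) (-lam)) as Hc.
    assert (0 <= Bc*Bc) by apply Rle_0_sqr.
    assert (A*A+C*C >= 2*(A*C)) by (pose proof (Rle_0_sqr (A-C)); unfold Rsqr in *; lra).
    assert (A*A+C*C >= -2*(A*C)) by (pose proof (Rle_0_sqr (A+C)); unfold Rsqr in *; lra).
    specialize (Hc ltac:(lra) HB ltac:(lra) ltac:(lra) ltac:(lra)). lra. }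
  destruct (indef M11 M12 M22 Hdet) as [u [v Huv]].
  exists (u*A), (u*Bc + v*A), (u*C + v*Bc), (v*C).
  split; [|split].
  - unfold cub, A, Bc, C. ring.
  - unfold cub, A, Bc, C. ring.
  - replace (Qf lam (u*A) (u*Bc + v*A) (u*C + v*Bc) (v*C))
      with (u*u*M11 + 2*u*v*M12 + v*v*M22) by (unfold Qf, M11, M12, M22; ring).
    exact Huv.
Qed.
Lemma FOP_filter {A} (R0 : A -> A -> Prop) (f : A -> bool) l :
  ForallOrdPairs R0 l -> ForallOrdPairs R0 (filter f l).
Proof.
  induction l as [|a l IH]; intros H; simpl; [constructor|].
  inversion H; subst.
  destruct (f a).
  - constructor; [|apply IH; auto].
    apply Forall_forall. intros x Hx. apply filter_In in Hx as [Hx _].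
    rewrite Forall_forall in H2. apply H2; auto.
  - apply IH; auto.
Qed.

Lemma in_one {A} (x y : A) : In x [y] -> x = y.
Proof. intros [H|[]]; auto. Qed.

Lemma in_two {A} (x y z : A) : In x [y; z] -> x = y \/ x = z.
Proof. intros [H|[H|[]]]; auto. Qed.

Lemma a_ge1_lam1 l : is_representation (q 1) l -> (1 <= length (filter posb l))%nat.
Proof.
  intros Hr. destruct (filter posb l) as [|t1 r] eqn:E; simpl; [|lia].
  exfalso. apply (key 1 l 1 1 0 0 Hr).
  - unfold Qf; lra.
  - rewrite E. intros t [].
Qed.

Lemma a_ge2 lam l : (-1 < lam < 1 \/ 1 < lam) -> is_representation (q lam) l ->
  (2 <= length (filter posb l))%nat.
Proof.
  intros Hl Hr.
  destruct (filter posb l) as [|t1 [|t2 r]] eqn:E; simpl; [| |lia]; exfalso.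
  - destruct (point1 lam 0 0 Hl) as [e0 [e1 [e2 [e3 [_ HQ]]]]].
    apply (key lam l e0 e1 e2 e3 Hr HQ). rewrite E. intros t [].
  - destruct (point1 lam (talpha t1) (tbeta t1) Hl) as [e0 [e1 [e2 [e3 [Hz HQ]]]]].
    apply (key lam l e0 e1 e2 e3 Hr HQ). rewrite E. intros t Ht.
    apply in_one in Ht. subst. exact Hz.
Qed.

Lemma a_ge3 lam l : lam <= -(3/5) -> is_representation (q lam) l -> honest l ->
  (3 <= length (filter posb l))%nat.
Proof.
  intros Hl Hr Hh.
  pose proof (FOP_filter _ posb l Hh) as Hh'.
  destruct (filter posb l) as [|t1 [|t2 [|t3 r]]] eqn:E; simpl; [| | |lia]; exfalso.
  - destruct (point2 lam 1 0 0 1 Hl ltac:(lra)) as [e0 [e1 [e2 [e3 [_ [_ HQ]]]]]].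
    apply (key lam l e0 e1 e2 e3 Hr HQ). rewrite E. intros t [].
  - set (a := talpha t1). set (b := tbeta t1).
    destruct (Req_dec (a*a + b*b) 0) as [Z|Z].
    + assert (a = 0) by nra. assert (b = 0) by nra.
      destruct (point2 lam 1 0 0 1 Hl ltac:(lra)) as [e0 [e1 [e2 [e3 [_ [_ HQ]]]]]].
      apply (key lam l e0 e1 e2 e3 Hr HQ). rewrite E. intros t Ht.
      apply in_one in Ht. subst t. fold a b. unfold cub.
      rewrite H, H0. ring.
    + destruct (point2 lam a b (-b) a Hl) as [e0 [e1 [e2 [e3 [Hz [_ HQ]]]]]].
      { intros C. apply Z. lra. }
      apply (key lam l e0 e1 e2 e3 Hr HQ). rewrite E. intros t Ht.
      apply in_one in Ht. subst t. exact Hz.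
  - inversion Hh'; subst. inversion H1; subst.
    destruct (point2 lam (talpha t1) (tbeta t1) (talpha t2) (tbeta t2) Hl H3)
      as [e0 [e1 [e2 [e3 [Hz1 [Hz2 HQ]]]]]].
    apply (key lam l e0 e1 e2 e3 Hr HQ). rewrite E. intros t Ht.
    apply in_two in Ht as [->| ->]; assumption.
Qed.

Definition flipt (t : term) : term := ((- tlam t, talpha t), - tbeta t).
Definition flip (l : list term) : list term := map flipt l.

Lemma rep_eval_flip l x y : rep_eval (flip l) x y = - rep_eval l x (-y).
Proof.
  induction l as [|a l IH]; [simpl; ring|].
  unfold flip in *. simpl map. rewrite !rep_eval_cons, IH.
  unfold flipt, tlam, talpha, tbeta; simpl. ring.
Qed.

Lemma flip_rep lam l : is_representation (q lam) l -> is_representation (q lam) (flip l).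
Proof.
  intros [Hf He]. split.
  - unfold flip. apply Forall_map. eapply Forall_impl; [|exact Hf].
    intros t Ht. unfold flipt, tlam in *; simpl. intros C; apply Ht; lra.
  - intros x y. rewrite rep_eval_flip, <- He. unfold q. ring.
Qed.

Lemma flip_honest l : honest l -> honest (flip l).
Proof.
  unfold honest, flip. induction l as [|a l IH]; intros H; simpl; [constructor|].
  inversion H; subst. constructor; [|apply IH; auto].
  apply Forall_map. eapply Forall_impl; [|exact H2].
  intros t Ht. unfold nonproportional, flipt, talpha, tbeta in *; simpl.
  intros C; apply Ht; lra.
Qed.

Lemma len_filter_map (f : term -> bool) (g : term -> term) l :
  length (filter f (map g l)) = length (filter (fun x => f (g x)) l).
Proof.
  induction l as [|a l IH]; simpl; [reflexivity|].
  destruct (f (g a)); simpl; rewrite IH; reflexivity.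
Qed.

Lemma len_filter_ext (f g : term -> bool) l : (forall x, f x = g x) ->
  length (filter f l) = length (filter g l).
Proof. intros H. rewrite (filter_ext f g H). reflexivity. Qed.

Lemma posb_flip t : posb (flipt t) = negb' t.
Proof.
  unfold posb, negb', flipt, tlam; simpl.
  destruct (Rlt_dec 0 (- fst (fst t))), (Rlt_dec (fst (fst t)) 0); auto; lra.
Qed.

Lemma negb_flip t : negb' (flipt t) = posb t.
Proof.
  unfold posb, negb', flipt, tlam; simpl.
  destruct (Rlt_dec (- fst (fst t)) 0), (Rlt_dec 0 (fst (fst t))); auto; lra.
Qed.

Lemma flip_pos l : length (filter posb (flip l)) = length (filter negb' l).
Proof. unfold flip. rewrite len_filter_map. apply len_filter_ext. apply posb_flip. Qed.

Lemma flip_neg l : length (filter negb' (flip l)) = length (filter posb l).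
Proof. unfold flip. rewrite len_filter_map. apply len_filter_ext. apply negb_flip. Qed.

Lemma in_badges_flip lam a b : in_badges (q lam) (a, b) -> in_badges (q lam) (b, a).
Proof.
  intros [l [Hr [Hh Hb]]]. exists (flip l). split; [apply flip_rep; auto|].
  split; [apply flip_honest; auto|].
  rewrite badge_eq in *. rewrite flip_pos, flip_neg.
  injection Hb as <- <-. reflexivity.
Qed.
Definition G0 (a1 b1 a2 b2 a3 b3 a4 b4 : R) := b1*b2*b3*b4.
Definition G1 (a1 b1 a2 b2 a3 b3 a4 b4 : R) :=
  -(a1*b2*b3*b4 + b1*a2*b3*b4 + b1*b2*a3*b4 + b1*b2*b3*a4).
Definition G2 (a1 b1 a2 b2 a3 b3 a4 b4 : R) :=
  a1*a2*b3*b4 + a1*b2*a3*b4 + a1*b2*b3*a4 + b1*a2*a3*b4 + b1*a2*b3*a4 + b1*b2*a3*a4.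
Definition G3 (a1 b1 a2 b2 a3 b3 a4 b4 : R) :=
  -(a1*a2*a3*b4 + a1*a2*b3*a4 + a1*b2*a3*a4 + b1*a2*a3*a4).
Definition G4 (a1 b1 a2 b2 a3 b3 a4 b4 : R) := a1*a2*a3*a4.

Lemma two_roots x y e2 e4 : x^4 + e2*x^2 + e4 = 0 -> y^4 + e2*y^2 + e4 = 0 ->
  x^2 <> y^2 -> e4 = x^2 * y^2.
Proof.
  intros Hx Hy Hne.
  assert (E : (x^2 - y^2) * (x^2 + y^2 + e2) = 0).
  { replace ((x^2 - y^2) * (x^2 + y^2 + e2)) with
      ((x^4 + e2*x^2 + e4) - (y^4 + e2*y^2 + e4)) by ring. lra. }
  apply Rmult_integral in E as [E|E]; [exfalso; apply Hne; lra|].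
  assert (e2 = -(x^2+y^2)) by lra. subst e2.
  replace (x^2*y^2) with (-(x^4 + - (x ^ 2 + y ^ 2) * x ^ 2) ) by ring. lra.
Qed.

Lemma final_roots t1 t2 t3 e2 e4 : e4 <= -1 ->
  t1^4 + e2*t1^2 + e4 = 0 -> t2^4 + e2*t2^2 + e4 = 0 -> t3^4 + e2*t3^2 + e4 = 0 ->
  t1 <> t2 -> t1 <> t3 -> t2 <> t3 -> False.
Proof.
  intros He4 R1 R2 R3 D12 D13 D23.
  destruct (Req_dec (t1^2) (t2^2)) as [S12|S12].
  - destruct (Req_dec (t1^2) (t3^2)) as [S13|S13].
    + assert (t2 = -t1).
      { assert ((t2 - t1)*(t2+t1) = 0) by (replace ((t2 - t1)*(t2+t1)) with (t2^2 - t1^2) by ring; lra).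
        apply Rmult_integral in H as [H|H]; [exfalso; apply D12; lra| lra]. }
      assert (t3 = -t1).
      { assert ((t3 - t1)*(t3+t1) = 0) by (replace ((t3 - t1)*(t3+t1)) with (t3^2 - t1^2) by ring; lra).
        apply Rmult_integral in H0 as [H0|H0]; [exfalso; apply D13; lra| lra]. }
      apply D23. lra.
    + pose proof (two_roots t1 t3 e2 e4 R1 R3 S13).
      assert (0 <= t1^2 * t3^2) by (apply Rmult_le_pos; apply pow2_ge_0). lra.
  - pose proof (two_roots t1 t2 e2 e4 R1 R2 S12).
    assert (0 <= t1^2 * t2^2) by (apply Rmult_le_pos; apply pow2_ge_0). lra.
Qed.

Lemma alg22 lam a1 b1 a2 b2 a3 b3 a4 b4 : -1 < lam <= 0 ->
  a1*b2 - a2*b1 <> 0 -> a1*b3 - a3*b1 <> 0 -> a1*b4 - a4*b1 <> 0 ->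
  a2*b3 - a3*b2 <> 0 -> a2*b4 - a4*b2 <> 0 -> a3*b4 - a4*b3 <> 0 ->
  G1 a1 b1 a2 b2 a3 b3 a4 b4 + lam * G3 a1 b1 a2 b2 a3 b3 a4 b4 = 0 ->
  lam * G1 a1 b1 a2 b2 a3 b3 a4 b4 + G3 a1 b1 a2 b2 a3 b3 a4 b4 = 0 ->
  G0 a1 b1 a2 b2 a3 b3 a4 b4 + lam * G2 a1 b1 a2 b2 a3 b3 a4 b4
    + G4 a1 b1 a2 b2 a3 b3 a4 b4 = 0 -> False.
Proof.
  intros Hl N12 N13 N14 N23 N24 N34 E1 E2 E3.
  assert (HG1 : G1 a1 b1 a2 b2 a3 b3 a4 b4 = 0).
  { assert (H : G1 a1 b1 a2 b2 a3 b3 a4 b4 * (1 - lam*lam) = 0).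
    { replace (G1 a1 b1 a2 b2 a3 b3 a4 b4 * (1 - lam*lam)) with
       ((G1 a1 b1 a2 b2 a3 b3 a4 b4 + lam * G3 a1 b1 a2 b2 a3 b3 a4 b4)
        - lam * (lam * G1 a1 b1 a2 b2 a3 b3 a4 b4 + G3 a1 b1 a2 b2 a3 b3 a4 b4)) by ring.
      rewrite E1, E2. ring. }
    apply Rmult_integral in H as [H|H]; auto. exfalso.
    assert ((1+lam)*(1-lam) > 0) by (apply Rmult_lt_0_compat; lra). lra. }
  assert (HG3 : G3 a1 b1 a2 b2 a3 b3 a4 b4 = 0) by (rewrite HG1 in E2; lra).
  clear E1 E2.
  destruct (Req_dec b1 0) as [Z|Z1].
  { subst b1. unfold G1 in HG1.
    assert (X0 : a1 <> 0) by (intro; subst; apply N12; ring).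
    assert (X1 : b2 <> 0) by (intro; subst; apply N12; ring).
    assert (X2 : b3 <> 0) by (intro; subst; apply N13; ring).
    assert (X3 : b4 <> 0) by (intro; subst; apply N14; ring).
    assert (XP : a1*b2*b3*b4 <> 0) by (repeat apply Rmult_integral_contrapositive_currified; auto).
    apply XP. lra. }
  destruct (Req_dec b2 0) as [Z|Z2].
  { subst b2. unfold G1 in HG1.
    assert (X0 : a2 <> 0) by (intro; subst; apply N12; ring).
    assert (X1 : b1 <> 0) by (intro; subst; apply N12; ring).
    assert (X2 : b3 <> 0) by (intro; subst; apply N23; ring).
    assert (X3 : b4 <> 0) by (intro; subst; apply N24; ring).
    assert (XP : b1*a2*b3*b4 <> 0) by (repeat apply Rmult_integral_contrapositive_currified; auto).
    apply XP. lra. }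
  destruct (Req_dec b3 0) as [Z|Z3].
  { subst b3. unfold G1 in HG1.
    assert (X0 : a3 <> 0) by (intro; subst; apply N13; ring).
    assert (X1 : b1 <> 0) by (intro; subst; apply N13; ring).
    assert (X2 : b2 <> 0) by (intro; subst; apply N23; ring).
    assert (X3 : b4 <> 0) by (intro; subst; apply N34; ring).
    assert (XP : b1*b2*a3*b4 <> 0) by (repeat apply Rmult_integral_contrapositive_currified; auto).
    apply XP. lra. }
  destruct (Req_dec b4 0) as [Z|Z4].
  { subst b4. unfold G1 in HG1.
    assert (X0 : a4 <> 0) by (intro; subst; apply N14; ring).
    assert (X1 : b1 <> 0) by (intro; subst; apply N14; ring).
    assert (X2 : b2 <> 0) by (intro; subst; apply N24; ring).
    assert (X3 : b3 <> 0) by (intro; subst; apply N34; ring).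
    assert (XP : b1*b2*b3*a4 <> 0) by (repeat apply Rmult_integral_contrapositive_currified; auto).
    apply XP. lra. }
  set (t1 := a1/b1). set (t2 := a2/b2). set (t3 := a3/b3). set (t4 := a4/b4).
  set (Pb := b1*b2*b3*b4).
  assert (HPb : Pb <> 0) by (unfold Pb; repeat apply Rmult_integral_contrapositive_currified; auto).
  set (e1 := t1+t2+t3+t4).
  set (e2 := t1*t2+t1*t3+t1*t4+t2*t3+t2*t4+t3*t4).
  set (e3 := t1*t2*t3+t1*t2*t4+t1*t3*t4+t2*t3*t4).
  set (e4 := t1*t2*t3*t4).
  assert (Ee1 : G1 a1 b1 a2 b2 a3 b3 a4 b4 = - Pb * e1)
    by (unfold G1, Pb, e1, t1, t2, t3, t4; field; repeat split; auto).
  assert (Ee3 : G3 a1 b1 a2 b2 a3 b3 a4 b4 = - Pb * e3)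
    by (unfold G3, Pb, e3, t1, t2, t3, t4; field; repeat split; auto).
  assert (Ee : G0 a1 b1 a2 b2 a3 b3 a4 b4 + lam * G2 a1 b1 a2 b2 a3 b3 a4 b4
               + G4 a1 b1 a2 b2 a3 b3 a4 b4 = Pb * (1 + lam*e2 + e4))
    by (unfold G0, G2, G4, Pb, e2, e4, t1, t2, t3, t4; field; repeat split; auto).
  assert (He1 : e1 = 0).
  { rewrite HG1 in Ee1. pose proof (eq_sym Ee1) as H; apply Rmult_integral in H as [H|H]; [|auto].
    exfalso; apply HPb; lra. }
  assert (He3 : e3 = 0).
  { rewrite HG3 in Ee3. pose proof (eq_sym Ee3) as H; apply Rmult_integral in H as [H|H]; [|auto].
    exfalso; apply HPb; lra. }
  assert (He : 1 + lam*e2 + e4 = 0).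
  { rewrite E3 in Ee. pose proof (eq_sym Ee) as H; apply Rmult_integral in H as [H|H]; [|auto].
    exfalso; apply HPb; auto. }
  assert (He2 : e2 = -(t1^2+t2^2+t3^2+t4^2)/2).
  { assert (e1^2 = t1^2+t2^2+t3^2+t4^2 + 2*e2) by (unfold e1, e2; ring).
    rewrite He1 in H. lra. }
  assert (Hle2 : e2 <= 0).
  { rewrite He2. assert (0 <= t1^2) by apply pow2_ge_0. assert (0 <= t2^2) by apply pow2_ge_0.
    assert (0 <= t3^2) by apply pow2_ge_0. assert (0 <= t4^2) by apply pow2_ge_0. lra. }
  assert (He4 : e4 <= -1).
  { assert (0 <= (-lam)*(-e2)) by (apply Rmult_le_pos; lra). lra. }
  assert (Hroot : forall z, (z-t1)*(z-t2)*(z-t3)*(z-t4) = z^4 + e2*z^2 + e4).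
  { intros z. replace (z^4 + e2*z^2 + e4) with (z^4 - e1*z^3 + e2*z^2 - e3*z + e4)
      by (rewrite He1, He3; ring). unfold e1, e2, e3, e4; ring. }
  assert (R1 : t1^4 + e2*t1^2 + e4 = 0) by (rewrite <- Hroot; ring).
  assert (R2 : t2^4 + e2*t2^2 + e4 = 0) by (rewrite <- Hroot; ring).
  assert (R3 : t3^4 + e2*t3^2 + e4 = 0) by (rewrite <- Hroot; ring).
  assert (D12 : t1 <> t2).
  { intro C. apply N12.
    assert (EE : a1*b2 - a2*b1 = (t1 - t2)*(b1*b2)) by (unfold t1, t2; field; auto).
    rewrite EE, C. ring. }
  assert (D13 : t1 <> t3).
  { intro C. apply N13.
    assert (EE : a1*b3 - a3*b1 = (t1 - t3)*(b1*b3)) by (unfold t1, t3; field; auto).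
    rewrite EE, C. ring. }
  assert (D23 : t2 <> t3).
  { intro C. apply N23.
    assert (EE : a2*b3 - a3*b2 = (t2 - t3)*(b2*b3)) by (unfold t2, t3; field; auto).
    rewrite EE, C. ring. }
  exact (final_roots t1 t2 t3 e2 e4 He4 R1 R2 R3 D12 D13 D23).
Qed.
Lemma len_split l : Forall (fun t => tlam t <> 0) l ->
  (length (filter posb l) + length (filter negb' l) = length l)%nat.
Proof.
  induction l as [|a l IH]; intros H; simpl; [reflexivity|].
  inversion H; subst.
  unfold posb at 1, negb' at 1.
  specialize (IH H3).
  destruct (Rlt_dec 0 (tlam a)), (Rlt_dec (tlam a) 0); simpl; try lra; try lia.
Qed.

Lemma no22 lam l : -1 < lam <= 0 -> is_representation (q lam) l -> honest l ->
  badge l = (2%nat, 2%nat) -> False.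
Proof.
  intros Hl Hr Hh Hb.
  rewrite badge_eq in Hb. injection Hb as Hp Hn.
  pose proof (len_split l (proj1 Hr)) as Hlen. rewrite Hp, Hn in Hlen.
  destruct l as [|t1 [|t2 [|t3 [|t4 [|t5 r]]]]]; simpl in Hlen; try lia.
  clear Hlen Hp Hn.
  inversion Hh as [|? ? F1 Hh1]; subst. inversion Hh1 as [|? ? F2 Hh2]; subst.
  inversion Hh2 as [|? ? F3 Hh3]; subst.
  inversion F1 as [|? ? N12 F1']; subst. inversion F1' as [|? ? N13 F1'']; subst.
  inversion F1'' as [|? ? N14 _]; subst.
  inversion F2 as [|? ? N23 F2']; subst. inversion F2' as [|? ? N24 _]; subst.
  inversion F3 as [|? ? N34 _]; subst.
  unfold nonproportional in *.
  set (a1 := talpha t1) in *. set (b1 := tbeta t1) in *.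
  set (a2 := talpha t2) in *. set (b2 := tbeta t2) in *.
  set (a3 := talpha t3) in *. set (b3 := tbeta t3) in *.
  set (a4 := talpha t4) in *. set (b4 := tbeta t4) in *.
  set (g0 := G0 a1 b1 a2 b2 a3 b3 a4 b4). set (g1 := G1 a1 b1 a2 b2 a3 b3 a4 b4).
  set (g2 := G2 a1 b1 a2 b2 a3 b3 a4 b4). set (g3 := G3 a1 b1 a2 b2 a3 b3 a4 b4).
  set (g4 := G4 a1 b1 a2 b2 a3 b3 a4 b4).
  pose proof (mom lam _ g0 g1 g2 g3 g4 0 0 Hr) as M1.
  pose proof (mom lam _ 0 g0 g1 g2 g3 g4 0 Hr) as M2.
  pose proof (mom lam _ 0 0 g0 g1 g2 g3 g4 Hr) as M3.
  rewrite !lsum_cons in M1, M2, M3. simpl lsum in M1, M2, M3.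
  fold a1 b1 a2 b2 a3 b3 a4 b4 in M1, M2, M3.
  assert (Z1 : forall a b, sext g0 g1 g2 g3 g4 0 0 a b = a^2 * ((b1*a - a1*b)*(b2*a - a2*b)*(b3*a - a3*b)*(b4*a - a4*b)))
    by (intros; unfold sext, g0, g1, g2, g3, g4, G0, G1, G2, G3, G4; ring).
  assert (Z2 : forall a b, sext 0 g0 g1 g2 g3 g4 0 a b = a*b * ((b1*a - a1*b)*(b2*a - a2*b)*(b3*a - a3*b)*(b4*a - a4*b)))
    by (intros; unfold sext, g0, g1, g2, g3, g4, G0, G1, G2, G3, G4; ring).
  assert (Z3 : forall a b, sext 0 0 g0 g1 g2 g3 g4 a b = b^2 * ((b1*a - a1*b)*(b2*a - a2*b)*(b3*a - a3*b)*(b4*a - a4*b)))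
    by (intros; unfold sext, g0, g1, g2, g3, g4, G0, G1, G2, G3, G4; ring).
  rewrite !Z1 in M1. rewrite !Z2 in M2. rewrite !Z3 in M3.
  apply (alg22 lam a1 b1 a2 b2 a3 b3 a4 b4 Hl N12 N13 N14 N23 N24 N34).
  - fold g1 g3. enough (g1 + lam*g3 + 0 = 0) by lra. rewrite <- M1. ring.
  - fold g1 g3. enough (0 + lam*g1 + g3 = 0) by lra. rewrite <- M3. ring.
  - fold g0 g2 g4. enough (g0 + lam*g2 + g4 = 0) by lra. rewrite <- M2. ring.
Qed.
Lemma posb_T t : 0 < tlam t -> posb t = true.
Proof. intros H; unfold posb; destruct (Rlt_dec 0 (tlam t)); auto; contradiction. Qed.
Lemma posb_F t : tlam t < 0 -> posb t = false.
Proof. intros H; unfold posb; destruct (Rlt_dec 0 (tlam t)); auto; lra. Qed.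
Lemma negb_T t : tlam t < 0 -> negb' t = true.
Proof. intros H; unfold negb'; destruct (Rlt_dec (tlam t) 0); auto; contradiction. Qed.
Lemma negb_F t : 0 < tlam t -> negb' t = false.
Proof. intros H; unfold negb'; destruct (Rlt_dec (tlam t) 0); auto; lra. Qed.

Ltac sgn_tac := unfold tlam; simpl; lra.
Ltac badge_tac :=
  rewrite badge_eq; simpl filter;
  repeat (first [ rewrite posb_T by sgn_tac | rewrite posb_F by sgn_tac
                | rewrite negb_T by sgn_tac | rewrite negb_F by sgn_tac ]);
  reflexivity.

Ltac np_tac := unfold nonproportional, talpha, tbeta; simpl.

Lemma ex11 : in_badges (q 1) (1%nat, 1%nat).
Proof.
  exists [((1/2, 1), 1); ((-(1/2), 1), -1)]. split; [split|split].
  - repeat constructor; unfold tlam; simpl; lra.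
  - intros x y. unfold q, rep_eval, tlam, talpha, tbeta; simpl. field.
  - repeat constructor; np_tac; lra.
  - badge_tac.
Qed.

Lemma pairU A u U x y : u <> 0 -> u*u = U ->
  (A/(2*u)) * (u*x + 1*y)^6 + (-(A/(2*u)) * (u*x + -1*y)^6)
  = A*(6*U^2*x^5*y + 20*U*x^3*y^3 + 6*x*y^5).
Proof. intros Hu HU. subst U. field. auto. Qed.

Definition pairterms (c u : R) : list term := [((c/(2*u), u), 1); ((-(c/(2*u)), u), -1)].

Lemma rep_eval_app l1 l2 x y : rep_eval (l1 ++ l2) x y = rep_eval l1 x y + rep_eval l2 x y.
Proof.
  induction l1 as [|a l1 IH]; simpl app; [simpl; ring|].
  rewrite !rep_eval_cons, IH. ring.
Qed.

Lemma rep_pair c u U x y : u <> 0 -> u*u = U ->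
  rep_eval (pairterms c u) x y = c*(6*U^2*x^5*y + 20*U*x^3*y^3 + 6*x*y^5).
Proof.
  intros Hu HU. rewrite <- (pairU c u U x y Hu HU).
  unfold pairterms. rewrite !rep_eval_cons. unfold tlam, talpha, tbeta; simpl. ring.
Qed.

Lemma pair_pos c u r : c <> 0 -> 0 < u ->
  length (filter posb (pairterms c u ++ r)) = S (length (filter posb r)).
Proof.
  intros Hc Hu. unfold pairterms. simpl app.
  destruct (Rlt_dec 0 c).
  - assert (0 < c/(2*u)) by (apply Rdiv_lt_0_compat; lra).
    simpl filter. rewrite posb_T by sgn_tac. rewrite posb_F by sgn_tac. reflexivity.
  - assert (c < 0) by lra.
    assert (c/(2*u) < 0).
    { unfold Rdiv. apply Rmult_neg_pos; [lra|]. apply Rinv_0_lt_compat; lra. }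
    simpl filter. rewrite posb_F by sgn_tac. rewrite posb_T by sgn_tac. reflexivity.
Qed.

Lemma pair_neg c u r : c <> 0 -> 0 < u ->
  length (filter negb' (pairterms c u ++ r)) = S (length (filter negb' r)).
Proof.
  intros Hc Hu. unfold pairterms. simpl app.
  destruct (Rlt_dec 0 c).
  - assert (0 < c/(2*u)) by (apply Rdiv_lt_0_compat; lra).
    simpl filter. rewrite negb_F by sgn_tac. rewrite negb_T by sgn_tac. reflexivity.
  - assert (c < 0) by lra.
    assert (c/(2*u) < 0).
    { unfold Rdiv. apply Rmult_neg_pos; [lra|]. apply Rinv_0_lt_compat; lra. }
    simpl filter. rewrite negb_T by sgn_tac. rewrite negb_F by sgn_tac. reflexivity.
Qed.

Lemma pair_forall c u : c <> 0 -> 0 < u -> Forall (fun t => tlam t <> 0) (pairterms c u).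
Proof.
  intros Hc Hu. assert (c/(2*u) <> 0).
  { unfold Rdiv. apply Rmult_integral_contrapositive_currified; auto.
    apply Rinv_neq_0_compat. lra. }
  unfold pairterms. repeat constructor; unfold tlam; simpl; auto.
  intro C; apply H; lra.
Qed.
Lemma ex22gen lam U V : 0 < U -> 0 < V -> U <> V -> lam <> U -> lam <> V ->
  1 - lam*(U+V) + U*V = 0 -> in_badges (q lam) (2%nat, 2%nat).
Proof.
  intros HU HV HUV HlU HlV Hc.
  set (A := (lam - V)/(U - V)). set (B := (U - lam)/(U - V)).
  set (u := sqrt U). set (v := sqrt V).
  assert (Hu : 0 < u) by (apply sqrt_lt_R0; auto).
  assert (Hv : 0 < v) by (apply sqrt_lt_R0; auto).
  assert (Hu2 : u*u = U) by (apply sqrt_sqrt; lra).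
  assert (Hv2 : v*v = V) by (apply sqrt_sqrt; lra).
  assert (Huv : u <> v) by (intro E; apply HUV; rewrite <- Hu2, <- Hv2, E; ring).
  assert (HUV' : U - V <> 0) by lra.
  assert (HA : A <> 0).
  { unfold A, Rdiv. apply Rmult_integral_contrapositive_currified; [lra|].
    apply Rinv_neq_0_compat; auto. }
  assert (HB : B <> 0).
  { unfold B, Rdiv. apply Rmult_integral_contrapositive_currified; [lra|].
    apply Rinv_neq_0_compat; auto. }
  assert (S0 : A + B = 1) by (unfold A, B; field; auto).
  assert (S1 : A*U + B*V = lam) by (unfold A, B; field; auto).
  assert (S2 : A*U^2 + B*V^2 = 1).
  { replace (A*U^2 + B*V^2) with (lam*(U+V) - U*V) by (unfold A, B; field; auto). lra. }
  exists (pairterms A u ++ pairterms B v). split; [split|split].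
  - apply Forall_app; split; apply pair_forall; auto.
  - intros x y. rewrite rep_eval_app, (rep_pair A u U), (rep_pair B v V); try lra.
    unfold q.
    replace (6 * x ^ 5 * y + 20 * lam * x ^ 3 * y ^ 3 + 6 * x * y ^ 5) with
      (6 * (A*U^2 + B*V^2) * x ^ 5 * y + 20 * (A*U + B*V) * x ^ 3 * y ^ 3 + 6 * (A+B) * x * y ^ 5)
      by (rewrite S0, S1, S2; ring).
    ring.
  - unfold pairterms. simpl app.
    repeat constructor; np_tac; intro C.
    all: try (apply Huv; lra).
    all: lra.
  - rewrite badge_eq, pair_pos, pair_neg; auto.
    change (pairterms B v) with (pairterms B v ++ []).
    rewrite pair_pos, pair_neg; auto.
Qed.

Lemma div_lt_div a b c d : 0 < c -> 0 < d -> a*d < b*c -> a/c < b/d.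
Proof.
  intros Hc Hd H. apply (Rmult_lt_reg_r (c*d)); [nra|].
  replace (a/c*(c*d)) with (a*d) by (field; lra).
  replace (b/d*(c*d)) with (b*c) by (field; lra). lra.
Qed.

Lemma ex22 lam : 0 < lam -> lam <> 1 -> in_badges (q lam) (2%nat, 2%nat).
Proof.
  intros H0 H1.
  destruct (Rlt_dec lam 1) as [Hl|Hl].
  - assert (Hd : 0 < 2 - lam*lam) by nra.
    assert (LU : lam/1 < 2/lam) by (apply div_lt_div; nra).
    assert (VL : lam/(2 - lam*lam) < lam/1) by (apply div_lt_div; nra).
    replace (lam/1) with lam in * by field.
    apply (ex22gen lam (2/lam) (lam/(2 - lam*lam))).
    + apply Rdiv_lt_0_compat; lra.
    + apply Rdiv_lt_0_compat; nra.
    + lra.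
    + lra.
    + lra.
    + field. lra.
  - assert (Hl' : 1 < lam) by (destruct (Req_dec lam 1); [contradiction|lra]).
    assert (Hd : 0 < 2*lam*lam - 1) by nra.
    assert (UL : 1/(2*lam) < lam/1) by (apply div_lt_div; nra).
    assert (VL : lam/(2*lam*lam - 1) < lam/1) by (apply div_lt_div; nra).
    assert (UV : 1/(2*lam) < lam/(2*lam*lam - 1)) by (apply div_lt_div; nra).
    replace (lam/1) with lam in * by field.
    apply (ex22gen lam (1/(2*lam)) (lam/(2*lam*lam - 1))).
    + apply Rdiv_lt_0_compat; lra.
    + apply Rdiv_lt_0_compat; nra.
    + lra.
    + lra.
    + lra.
    + field. lra.
Qed.
Lemma ex33 lam : lam < 1 -> in_badges (q lam) (3%nat, 3%nat).
Proof.
  intros Hl.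
  set (A := (37 - 13*lam)/24). set (B := -(2/3)*(1-lam)). set (C := (1-lam)/8).
  assert (HA : A <> 0) by (unfold A; lra).
  assert (HB : B <> 0) by (unfold B; lra).
  assert (HC : C <> 0) by (unfold C; lra).
  exists (pairterms A 1 ++ pairterms B 2 ++ pairterms C 3). split; [split|split].
  - apply Forall_app; split; [|apply Forall_app; split]; apply pair_forall; auto; lra.
  - intros x y. rewrite !rep_eval_app, (rep_pair A 1 1), (rep_pair B 2 4), (rep_pair C 3 9); try lra.
    unfold q, A, B, C. field.
  - unfold pairterms. simpl app.
    repeat constructor; np_tac; lra.
  - rewrite badge_eq, !pair_pos, !pair_neg; auto; try lra.
    change (pairterms C 3) with (pairterms C 3 ++ []).
    rewrite pair_pos, pair_neg; auto; lra.
Qed.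
Definition T3 (u : R) := 1 + u + u^2.
Definition P5 (u : R) := 1 + u + u^2 + u^3 + u^4.
Definition lamf (u : R) := -(u * T3 u) / P5 u.
Definition w0f (u : R) := u*(1-u+u^2)*(1+u^4) / ((u-1)^3*(1-u^5)).
Definition w1f (u : R) := (1+u^2)*(1+u^4) / ((u-1)^4 * u * T3 u * P5 u).
Definition w2f (u : R) := -1 / ((u-1)^4 * u * T3 u * P5 u).

Lemma fam_rep u x y : 1 < u ->
  q (lamf u) x y = rep_eval [((w0f u, 1), 1); ((w1f u, u), 1); ((w1f u, 1), u);
                             ((w2f u, u^2), 1); ((w2f u, 1), u^2)] x y.
Proof.
  intros Hu.
  assert (T3 u > 0) by (unfold T3; nra).
  assert (P5 u > 0) by (unfold P5; nra).
  assert (u - 1 <> 0) by lra.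
  assert (1 - u^5 <> 0).
  { assert (u^5 > 1). { replace (u^5) with (u*u*u*u*u) by ring.
      assert (u*u > 1) by nra. assert (u*u*u > 1) by nra. assert (u*u*u*u > 1) by nra. nra. }
    lra. }
  unfold rep_eval, q, lamf, w0f, w1f, w2f, tlam, talpha, tbeta; simpl.
  unfold T3, P5 in *.
  field. repeat split; lra.
Qed.

Lemma fam_root lam : -(3/5) < lam < 0 -> exists u, 1 < u /\ lam = lamf u.
Proof.
  intros Hl.
  set (mu := -lam).
  set (Uh := 3/mu + 1).
  assert (Hmu : 0 < mu) by (unfold mu; lra).
  assert (HUh : 1 < Uh) by (unfold Uh; assert (0 < 3/mu) by (apply Rdiv_lt_0_compat; lra); lra).
  set (f := fun u => -(u*(1+u+u^2) + lam*(1+u+u^2+u^3+u^4))).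
  assert (Hc : continuity f) by (unfold f; reg).
  assert (Hf1 : f 1 < 0) by (unfold f; lra).
  assert (HfU : 0 < f Uh).
  { unfold f.
    assert (E : mu * Uh = 3 + mu) by (unfold Uh; field; lra).
    assert (H3 : Uh*(1+Uh+Uh^2) <= 3*Uh^3).
    { assert (Uh <= Uh^3) by (simpl; nra). assert (Uh^2 <= Uh^3) by (simpl; nra).
      replace (Uh*(1+Uh+Uh^2)) with (Uh + Uh^2 + Uh^3) by ring. lra. }
    assert (H4 : 3*Uh^3 < mu*(1+Uh+Uh^2+Uh^3+Uh^4)).
    { assert (mu*Uh^4 = (3+mu)*Uh^3) by (rewrite <- E; ring).
      assert (0 < Uh^3) by (apply pow_lt; lra).
      assert (0 < mu*(1+Uh+Uh^2)) by (apply Rmult_lt_0_compat; [lra| simpl; nra]).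
      nra. }
    unfold mu in H4. lra. }
  destruct (IVT f 1 Uh Hc HUh Hf1 HfU) as [u [[Hu1 Hu2] Hfu]].
  assert (Hu : 1 < u).
  { destruct (Req_dec u 1) as [E|E]; [subst u; lra|lra]. }
  exists u. split; auto.
  assert (HP : P5 u > 0) by (unfold P5; nra).
  unfold lamf. unfold f in Hfu. unfold T3, P5 in *.
  assert (E : lam * (1+u+u^2+u^3+u^4) = -(u*(1+u+u^2))) by lra.
  rewrite <- E. field. lra.
Qed.
Lemma ex23_fam u : 1 < u -> in_badges (q (lamf u)) (2%nat, 3%nat).
Proof.
  intros Hu.
  assert (HT : T3 u > 0) by (unfold T3; nra).
  assert (HP : P5 u > 0) by (unfold P5; nra).
  assert (Hu2 : u*u > 1) by nra.
  assert (Hu3 : u*u*u > 1) by nra.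
  assert (Hu4 : u*u*(u*u) > 1) by nra.
  assert (Huu : u*u > u) by nra.
  assert (Hu5 : u^5 > 1) by (replace (u^5) with (u*u*(u*u)*u) by ring; nra).
  assert (D : (u-1)^4 * u * T3 u * P5 u > 0).
  { repeat apply Rmult_lt_0_compat; try lra; apply pow_lt; lra. }
  set (w0 := w0f u). set (w1 := w1f u). set (w2 := w2f u).
  assert (H0 : w0 < 0).
  { unfold w0, w0f. unfold Rdiv. apply Rmult_pos_neg.
    - repeat apply Rmult_lt_0_compat; try lra; nra.
    - apply Rinv_lt_0_compat. apply Rmult_pos_neg; [apply pow_lt; lra| lra]. }
  assert (H1 : w1 > 0).
  { unfold w1, w1f. apply Rdiv_lt_0_compat; [|exact D]. apply Rmult_lt_0_compat; nra. }
  assert (H2 : w2 < 0).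
  { unfold w2, w2f. unfold Rdiv. apply Rmult_neg_pos; [lra|]. apply Rinv_0_lt_compat. exact D. }
  exists [((w0, 1), 1); ((w1, u), 1); ((w1, 1), u); ((w2, u^2), 1); ((w2, 1), u^2)].
  split; [split|split].
  - repeat constructor; unfold tlam; simpl; lra.
  - intros x y. apply fam_rep; auto.
  - repeat constructor; np_tac; lra.
  - badge_tac.
Qed.

Lemma ex23_zero : in_badges (q 0) (2%nat, 3%nat).
Proof.
  exists [((-(4/2223), -3), 1); ((-(85/12), 0), 1); ((-(243/364), 4/3), 1);
          ((4/9, 3/2), 1); ((972/133, 1/6), 1)].
  split; [split|split].
  - repeat constructor; unfold tlam; simpl; lra.
  - intros x y. unfold q, rep_eval, tlam, talpha, tbeta; simpl. field.
  - repeat constructor; np_tac; lra.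
  - badge_tac.
Qed.

Lemma ex23 lam : -(3/5) < lam <= 0 -> in_badges (q lam) (2%nat, 3%nat).
Proof.
  intros Hl. destruct (Req_dec lam 0) as [E|E].
  - subst. apply ex23_zero.
  - destruct (fam_root lam) as [u [Hu ->]]; [lra|]. apply ex23_fam; auto.
Qed.
Lemma badge_lb lam k :
  (forall l, is_representation (q lam) l -> honest l -> (k <= length (filter posb l))%nat) ->
  forall cd, in_badges (q lam) cd -> badge_le (k, k) cd.
Proof.
  intros H [a b] [l [Hr [Hh Hb]]].
  rewrite badge_eq in Hb. injection Hb as Ha Hb'.
  split; simpl.
  - rewrite <- Ha. apply H; auto.
  - rewrite <- Hb', <- flip_pos. apply H; [apply flip_rep | apply flip_honest]; auto.
Qed.

Lemma sig_single p t : in_badges p t -> (forall cd, in_badges p cd -> badge_le t cd) ->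
  forall ab, is_signature p ab <-> ab = t.
Proof.
  intros Ht Hall ab. split.
  - intros [Hab Hmin]. symmetry. apply Hmin; auto.
  - intros ->. split; auto. intros cd Hcd Hle.
    destruct (Hall cd Hcd) as [A1 A2]. destruct Hle as [B1 B2].
    destruct cd, t; simpl in *. f_equal; lia.
Qed.

Lemma main1 : forall ab, is_signature (q 1) ab <-> ab = (1%nat, 1%nat).
Proof.
  apply sig_single; [apply ex11|].
  apply badge_lb. intros l Hr _. apply a_ge1_lam1; auto.
Qed.

Lemma main2 lam : 0 < lam -> lam <> 1 ->
  forall ab, is_signature (q lam) ab <-> ab = (2%nat, 2%nat).
Proof.
  intros H0 H1. apply sig_single; [apply ex22; auto|].
  apply badge_lb. intros l Hr _. apply (a_ge2 lam); auto.
  destruct (Rlt_dec lam 1); [left; lra| right; destruct (Req_dec lam 1); [contradiction|lra]].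
Qed.

Lemma main4 lam : lam <= -(3/5) ->
  forall ab, is_signature (q lam) ab <-> ab = (3%nat, 3%nat).
Proof.
  intros H. apply sig_single; [apply ex33; lra|].
  apply badge_lb. intros l Hr Hh. apply (a_ge3 lam); auto.
Qed.

Lemma main3 lam : -(3/5) < lam <= 0 ->
  forall ab, is_signature (q lam) ab <-> ab = (2%nat, 3%nat) \/ ab = (3%nat, 2%nat).
Proof.
  intros Hl.
  assert (B23 : in_badges (q lam) (2%nat, 3%nat)) by (apply ex23; auto).
  assert (B32 : in_badges (q lam) (3%nat, 2%nat)) by (apply in_badges_flip; auto).
  assert (LB : forall cd, in_badges (q lam) cd -> badge_le (2%nat, 2%nat) cd).
  { apply badge_lb. intros l Hr _. apply (a_ge2 lam); auto. left; lra. }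
  assert (N22 : ~ in_badges (q lam) (2%nat, 2%nat)).
  { intros [l [Hr [Hh Hb]]]. apply (no22 lam l); auto. lra. }
  assert (ALL : forall cd, in_badges (q lam) cd ->
     badge_le (2%nat, 3%nat) cd \/ badge_le (3%nat, 2%nat) cd).
  { intros [c d] Hcd. destruct (LB _ Hcd) as [L1 L2]. simpl in *.
    destruct (Nat.eq_dec c 2) as [->|Ec]; [destruct (Nat.eq_dec d 2) as [->|Ed]|].
    - contradiction.
    - left; split; simpl; lia.
    - right; split; simpl; lia. }
  intros ab. split.
  - intros [Hab Hmin]. destruct (ALL ab Hab) as [L|L].
    + left. symmetry. apply Hmin; auto.
    + right. symmetry. apply Hmin; auto.
  - intros [->| ->]; split; auto; intros cd Hcd Hle;
      destruct (ALL cd Hcd) as [[A1 A2]|[A1 A2]]; destruct Hle as [B1 B2];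
      destruct cd; simpl in *; f_equal; lia.
Qed.

Theorem theorem4p4 :
  (forall ab, is_signature (q 1) ab <-> ab = (1%nat, 1%nat)) /\
  (forall lam : R, 0 < lam -> lam <> 1 ->
     forall ab, is_signature (q lam) ab <-> ab = (2%nat, 2%nat)) /\
  (forall lam : R, -(3/5) < lam <= 0 ->
     forall ab, is_signature (q lam) ab <-> ab = (2%nat, 3%nat) \/ ab = (3%nat, 2%nat)) /\
  (forall lam : R, lam <= -(3/5) ->
     forall ab, is_signature (q lam) ab <-> ab = (3%nat, 3%nat)).
Proof.
  split; [exact main1|]. split; [exact main2|]. split; [exact main3|exact main4].
Qed.
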